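(* Let $P$ be a finite poset whose Hasse diagram is a rooted tree. (1) If the root is the greatest element of $P$, then the basic elements of $P$ are exactly the leaves (the minimal elements). (2) If the root is the least element of $P$, then the basic elements of $P$ are exactly the minimal elements of the induced subposet $P_1=\{x\in P:\ \text{there is exactly one leaf } \ell \text{ with } x\le \ell\}$.
   Context: Such a poset is a $\mathcal{V}$-poset. An element $x$ of a $\mathcal{V}$-poset is basic if: (B.1) there are no two incomparable elements $u,v$ with $x>u$ and $x>v$; (B.2) there are no two incomparable elements $u,v$ with $x<u$ and $x<v$; (B.3) there is no element $u$ with $u<x$ such that for all $w\neq u,x$ one has ($u\ge w\iff x\ge w$) and ($u\le w\iff x\le w$). The leaves of the rooted tree are its vertices with no children (the vertices of degree one other than the root, or the root itself if $P$ has one element). *)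

(* Defs.v *)
From mathcomp Require Import all_boot all_order.
Set Implicit Arguments. Unset Strict Implicit. Unset Printing Implicit Defensive.
Import Order.Theory.
Local Open Scope order_scope.

Section HasseTree.
Context {d : Order.disp_t} {T : finPOrderType d}.

Definition covers (x y : T) : bool :=
  (x < y) && [forall z, ~~ ((x < z) && (z < y))].

Definition hasse (x y : T) : bool := covers x y || covers y x.

Definition hasse_connected : Prop := forall x y : T, connect hasse x y.

(* no simple cycle (of length >= 3) in the Hasse diagram *)
Definition hasse_acyclic : Prop :=
  forall (x : T) (p : seq T), uniq (x :: p) -> 2 <= size p ->
    path hasse x p -> ~~ hasse (last x p) x.

Definition hasse_tree : Prop := hasse_connected /\ hasse_acyclic.

Definition leaf (r x : T) : bool :=
  (#|T| == 1)%N || ((x != r) && (#|[set y | hasse x y]| == 1)%N).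

Definition minimal (x : T) : Prop := forall y : T, ~ (y < x).

Definition basic (x : T) : Prop :=
  (~ exists u v : T, (u >< v) /\ u < x /\ v < x) /\
  (~ exists u v : T, (u >< v) /\ x < u /\ x < v) /\
  (~ exists u : T, u < x /\
       forall w : T, w != u -> w != x ->
         ((w <= u) <-> (w <= x)) /\ ((u <= w) <-> (x <= w))).

Definition in_P1 (r x : T) : bool :=
  #|[set l | leaf r l && (x <= l)]| == 1%N.

End HasseTree.

(* Main.v *)
Require Import Defs.
From mathcomp Require Import all_boot all_order.
Import Order.Theory.
Local Open Scope order_scope.

Section Gen.
Context {d : Order.disp_t} {T : finPOrderType d}.
Implicit Types x y z u v w a b c : T.

Lemma coversW x y : covers x y -> x < y.
Proof. by case/andP. Qed.
Arguments coversW {x y}.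

Lemma coversI x y : x < y -> (forall z, x < z -> z < y -> False) -> covers x y.
Proof.
move=> xy H; rewrite /covers xy /=; apply/forallP=> z; apply/negP=>/andP[]; exact: H.
Qed.

Lemma coversE x y z : covers x y -> x < z -> z < y -> False.
Proof.
move=> /andP[_ /forallP/(_ z)] /negP H a b; apply: H; by rewrite a b.
Qed.
Arguments coversE {x y z}.

Lemma card_down_lt a c : c < a -> (#|[set z | (z < c)%O]| < #|[set z | (z < a)%O]|)%N.
Proof.
move=> ca; apply: proper_card; rewrite properE; apply/andP; split.
  by apply/subsetP => z; rewrite !inE => zc; exact: lt_trans zc ca.
by apply/subsetPn; exists c; rewrite !inE ?ltxx.
Qed.
Arguments card_down_lt {a c}.

Lemma card_up_lt a c : a < c -> (#|[set z | (c < z)%O]| < #|[set z | (a < z)%O]|)%N.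
Proof.
move=> ca; apply: proper_card; rewrite properE; apply/andP; split.
  by apply/subsetP => z; rewrite !inE => zc; exact: lt_trans ca zc.
by apply/subsetPn; exists c; rewrite !inE ?ltxx.
Qed.
Arguments card_up_lt {a c}.

Lemma exists_min (P : pred T) x : P x ->
  exists y, [/\ P y, y <= x & forall z, P z -> ~ z < y].
Proof.
suff H : forall n x, (#|[set z | (z < x)%O]| <= n)%N -> P x ->
  exists y, [/\ P y, y <= x & forall z, P z -> ~ z < y].
  by move=> Px; exact: H _ x (leqnn _) Px.
elim=> [|n IH] {}x Hx Px.
  exists x; split => // z Pz zx.
  have : (0 < #|[set z | (z < x)%O]|)%N by apply/card_gt0P; exists z; rewrite inE.
  by rewrite leqn0 in Hx; rewrite (eqP Hx).
case: (boolP [exists z, P z && (z < x)]) => [/existsP[z /andP[Pz zx]]|/existsPn none].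
  have Hz : (#|[set w | (w < z)%O]| <= n)%N.
    by rewrite -ltnS; exact: leq_trans (card_down_lt zx) Hx.
  have [y [Py yz my]] := IH z Hz Pz.
  by exists y; split => //; exact: le_trans yz (ltW zx).
exists x; split => // z Pz zx.
by move: (none z); rewrite Pz zx.
Qed.

Lemma up_cover x y : x < y -> exists c, covers x c /\ c <= y.
Proof.
move=> xy.
have Py : (x < y) && (y <= y) by rewrite xy lexx.
have [c [/andP[xc cy] _ minc]] :=
  @exists_min (fun z => (x < z) && (z <= y)) y Py.
exists c; split => //; apply: coversI => // z xz zc.
apply: (minc z) => //; rewrite xz /=; exact: le_trans (ltW zc) cy.
Qed.
Arguments up_cover {x y}.

Lemma path_lt_head a q z : path <%O a q -> z \in a :: q -> a <= z.
Proof.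
move=> pq; rewrite inE => /orP[/eqP->//|zq].
have := order_path_min (@lt_trans _ T) pq.
by move/allP/(_ z zq)/ltW.
Qed.
Arguments path_lt_head {a q z}.

Lemma path_lt_last a q : path <%O a q -> a <= last a q.
Proof.
elim: q a => [|b q IH] a //= /andP[ab pq].
exact: le_trans (ltW ab) (IH _ pq).
Qed.
Arguments path_lt_last {a q}.

Lemma path_lt_belast a q z : path <%O a q -> z \in belast a q -> z < last a q.
Proof.
elim: q a => [|b q IH] a //= /andP[ab pq]; rewrite inE => /orP[/eqP->|zq].
  exact: lt_le_trans ab (path_lt_last pq).
exact: IH.
Qed.
Arguments path_lt_belast {a q z}.

Lemma path_lt_uniq a q : path <%O a q -> uniq (a :: q).
Proof.
move=> pq; apply: (sorted_uniq (@lt_trans _ T) (@ltxx _ T)); exact: pq.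
Qed.
Arguments path_lt_uniq {a q}.

Lemma chain_exists a b : a <= b -> exists p, path covers a p /\ last a p = b.
Proof.
suff H : forall n a, (#|[set z | (a < z)%O]| <= n)%N -> a <= b ->
   exists p, path covers a p /\ last a p = b.
  by move=> ab; exact: H _ a (leqnn _) ab.
elim=> [|n IH] {}a Hn ab; case: (eqVneq a b) => [->|neq]; first by exists [::].
- have ab' : a < b by rewrite lt_neqAle neq ab.
  have : (0 < #|[set z | (a < z)%O]|)%N by apply/card_gt0P; exists b; rewrite inE.
  by rewrite leqn0 in Hn; rewrite (eqP Hn).
- by exists [::].
- have ab' : a < b by rewrite lt_neqAle neq ab.
  have [c [ac cb]] := up_cover ab'.
  have Hc : (#|[set z | (c < z)%O]| <= n)%N.
    by rewrite -ltnS; exact: leq_trans (card_up_lt (coversW ac)) Hn.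
  have [p [pp lp]] := IH c Hc cb.
  by exists (c :: p); rewrite /= ac pp.
Qed.
Arguments chain_exists {a b}.

Lemma upcover_unique : hasse_tree (T:=T) ->
  forall x u v w, covers x u -> covers x v -> u <= w -> v <= w -> u = v.
Proof.
move=> ht x u v w xu xv uw vw; apply/eqP/negPn/negP => uv.
have Pw : (u <= w) && (v <= w) by rewrite uw vw.
have [w' [/andP[uw' vw'] _ minw]] :=
  @exists_min (fun z => (u <= z) && (v <= z)) w Pw.
have [p [pp lp]] := chain_exists uw'.
have [q [pq lq]] := chain_exists vw'.
have ltp : path <%O u p := sub_path (fun a c => @coversW a c) pp.
have ltq : path <%O v q := sub_path (fun a c => @coversW a c) pq.
case: q pq lq ltq => [|b q] pq lq ltq.
  move: lq => /= e; rewrite -e in uw'.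
  have uv' : u < v by rewrite lt_neqAle uv uw'.
  exact: coversE xv (coversW xu) uv'.
set s := (u :: p) ++ rev (belast v (b :: q)).
have vx : v != x.
  by apply/eqP => e; move: (coversW xv); rewrite e ltxx.
have Hlast : last x s = v by rewrite /s /= rev_cons last_cat last_rcons.
have Hsize : (2 <= size s)%N by rewrite /s size_cat size_rev size_belast /= addnS.
have Hpath : path hasse x s.
  rewrite /s cat_path /= {1}/hasse xu /= lp -lq rev_path.
  rewrite (sub_path _ pp) /=; last by move=> a c ac; rewrite /hasse ac.
  by apply: (sub_path _ pq) => a c ac; rewrite /hasse ac orbT.
have Hub : forall z, z \in u :: p -> u <= z by move=> z; exact: path_lt_head ltp.
have Hvb : forall z, z \in belast v (b :: q) -> v <= z.
  by move=> z /mem_belast; exact: path_lt_head ltq.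
have Huniq : uniq (x :: s).
  rewrite cons_uniq; apply/andP; split.
    rewrite /s mem_cat mem_rev; apply/negP => /orP[/Hub|/Hvb] h.
      by move: (lt_le_trans (coversW xu) h); rewrite ltxx.
    by move: (lt_le_trans (coversW xv) h); rewrite ltxx.
  rewrite /s cat_uniq rev_uniq (path_lt_uniq ltp) /=.
  apply/andP; split.
    apply/hasPn => z; rewrite mem_rev => zb; apply/negP => zu.
    have zlt : z < w' by rewrite -lq; exact: path_lt_belast ltq zb.
    by apply: (minw z) => //; rewrite (Hub z zu) (Hvb z zb).
  have := path_lt_uniq ltq; rewrite lastI rcons_uniq => /andP[_ h]; exact: h.
have := ht.2 x s Huniq Hsize Hpath.
by rewrite Hlast /hasse xv orbT.
Qed.


Arguments upcover_unique _ {x u v w}.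

Lemma up_comparable : hasse_tree (T:=T) -> forall r, (forall x, x <= r) ->
  forall x u v, x <= u -> x <= v -> u >=< v.
Proof.
move=> ht r top.
suff H : forall n x, (#|[set z | (x < z)%O]| <= n)%N ->
   forall u v, x <= u -> x <= v -> u >=< v.
  by move=> x; exact: H _ x (leqnn _).
elim=> [|n IH] x Hn u v xu xv.
  case: (eqVneq x u) => [<-|nxu]; first exact: le_comparable.
  have xu' : x < u by rewrite lt_neqAle nxu xu.
  have : (0 < #|[set z | (x < z)%O]|)%N by apply/card_gt0P; exists u; rewrite inE.
  by rewrite leqn0 in Hn; rewrite (eqP Hn).
case: (eqVneq x u) => [<-|nxu]; first exact: le_comparable.
case: (eqVneq x v) => [<-|nxv]; first by rewrite comparable_sym; exact: le_comparable.
have xu' : x < u by rewrite lt_neqAle nxu xu.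
have xv' : x < v by rewrite lt_neqAle nxv xv.
have [c1 [xc1 c1u]] := up_cover xu'.
have [c2 [xc2 c2v]] := up_cover xv'.
have e := upcover_unique ht xc1 xc2 (top c1) (top c2).
rewrite -e in c2v.
have Hc : (#|[set z | (c1 < z)%O]| <= n)%N.
  by rewrite -ltnS; exact: leq_trans (card_up_lt (coversW xc1)) Hn.
exact: IH c1 Hc u v c1u c2v.
Qed.

Lemma cover_incomp c c' x : covers c x -> covers c' x -> c != c' -> ~~ (c >=< c').
Proof.
move=> cx c'x neq; apply/negP => /orP[h|h].
  have h' : c < c' by rewrite lt_neqAle neq h.
  exact: coversE cx h' (coversW c'x).
have h' : c' < c by rewrite lt_neqAle eq_sym neq h.
exact: coversE c'x h' (coversW cx).
Qed.

Lemma deg1 x c : hasse x c ->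
  (#|[set y | hasse x y]| == 1)%N <-> (forall y, hasse x y -> y = c).
Proof.
move=> hc; split.
  move/cards1P => [a Ha] y hy.
  have : y \in [set a] by rewrite -Ha inE.
  have : c \in [set a] by rewrite -Ha inE.
  by rewrite !inE => /eqP -> /eqP ->.
move=> H; apply/eqP.
rewrite (_ : [set y | hasse x y] = [set c]) ?cards1 //.
apply/setP => y; rewrite !inE; apply/idP/eqP => [/H //|->//].
Qed.

Lemma all_eq1 : (#|T| == 1)%N -> forall a b : T, a = b.
Proof.
move=> h; have : (#|T| <= 1)%N by rewrite (eqP h).
move/fintype_le1P => H a b; exact: (H b a).
Qed.

Lemma exists_other (r : T) : (#|T| != 1)%N -> exists y, y != r.
Proof.
move=> h; case: (boolP [exists y, y != r]) => [/existsP //|/existsPn H].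
have : (#|T| <= 1)%N.
  apply/fintype_le1P => a b.
  by move: (H a) (H b); rewrite !negbK => /eqP -> /eqP ->.
have : (0 < #|T|)%N by apply/card_gt0P; exists r.
by move: h; case: #|T| => [|[|k]].
Qed.

End Gen.
Arguments coversW {d T x y}.
Arguments coversE {d T x y z}.
Arguments card_down_lt {d T a c}.
Arguments card_up_lt {d T a c}.
Arguments up_cover {d T x y}.
Arguments path_lt_head {d T a q z}.
Arguments path_lt_last {d T a q}.
Arguments path_lt_belast {d T a q z}.
Arguments path_lt_uniq {d T a q}.
Arguments chain_exists {d T a b}.
Arguments upcover_unique {d T} _ {x u v w}.


Section Dual1.
Context {d : Order.disp_t} {T : finPOrderType d}.
Implicit Types x y z u v w a b c : T.

Lemma covers_dual (x y : T) : @covers _ T^d x y = covers y x.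
Proof.
rewrite /covers; congr andb; apply: eq_forallb => z; by rewrite andbC.
Qed.

Lemma hasse_dual (x y : T) : @hasse _ T^d x y = hasse x y.
Proof. by rewrite /hasse !covers_dual orbC. Qed.

Lemma hasse_tree_dual : hasse_tree (T:=T) -> hasse_tree (T:=T^d).
Proof.
move=> [hc ha]; split.
  move=> x y; rewrite (eq_connect (@hasse_dual)); exact: hc.
move=> x p U S; rewrite (eq_path (@hasse_dual)) hasse_dual; exact: ha.
Qed.

Lemma leaf_dual (r x : T) : @leaf _ T^d r x = leaf r x.
Proof.
rewrite /leaf; congr (_ || (_ && _)); congr (_ == _).
by apply: eq_card => y; rewrite !inE hasse_dual.
Qed.

Lemma down_cover x y : y < x -> exists c, covers c x /\ y <= c.
Proof.
move=> yx; have [c [h1 h2]] := @up_cover _ (T^d) x y yx.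
by exists c; rewrite -covers_dual.
Qed.

Lemma exists_max (P : pred T) x : P x ->
  exists y, [/\ P y, x <= y & forall z, P z -> ~ y < z].
Proof. move=> Px; exact: (@exists_min _ T^d P x Px). Qed.

Lemma downcover_unique : hasse_tree (T:=T) ->
  forall x u v w, covers u x -> covers v x -> w <= u -> w <= v -> u = v.
Proof.
move=> ht x u v w ux vx wu wv.
apply: (@upcover_unique _ T^d (hasse_tree_dual ht) x u v w) => //;
by rewrite covers_dual.
Qed.

Lemma down_comparable : hasse_tree (T:=T) -> forall r, (forall x, r <= x) ->
  forall x u v, u <= x -> v <= x -> u >=< v.
Proof.
move=> ht r bot x u v ux vx.
rewrite comparable_sym.
exact: (@up_comparable _ T^d (hasse_tree_dual ht) r bot x u v ux vx).
Qed.

End Dual1.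
Arguments downcover_unique {d T} _ {x u v w}.
Arguments down_cover {d T x y}.

Section Gen2.
Context {d : Order.disp_t} {T : finPOrderType d}.
Implicit Types x y z u v w a b c : T.

Lemma leaf_min : hasse_tree (T:=T) -> forall r, (forall x, x <= r) ->
  forall x, leaf r x <-> minimal x.
Proof.
move=> ht r top x.
case: (boolP (#|T| == 1)%N) => T1.
  rewrite /leaf T1; split => // _ y; by rewrite (all_eq1 T1 y x) ltxx.
rewrite /leaf (negbTE T1) /=.
case: (eqVneq x r) => [->|xr] /=.
  split => // m; exfalso.
  have [y yr] := exists_other r T1.
  by apply: (m y); rewrite lt_neqAle yr top.
have xr' : x < r by rewrite lt_neqAle xr top.
have [c [xc _]] := up_cover xr'.
have hc : hasse x c by rewrite /hasse xc.
apply: (iff_trans (deg1 _ _ hc)); split.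
  move=> H y yx.
  have [c' [c'x _]] := down_cover yx.
  have e : c' = c by apply: H; rewrite /hasse c'x orbT.
  rewrite e in c'x.
  by move: (lt_trans (coversW c'x) (coversW xc)); rewrite ltxx.
move=> m y /orP[xy|yx].
  exact: (@upcover_unique _ _ ht x y c r xy xc (top y) (top c)).
by exfalso; apply: (m y); exact: coversW yx.
Qed.


Lemma basic_min : hasse_tree (T:=T) -> forall r, (forall x, x <= r) ->
  forall x, basic x <-> minimal x.
Proof.
move=> ht r top x; split.
- move=> [B1 [_ B3]] y yx.
  have [c [cx _]] := down_cover yx.
  apply: B3; exists c; split; first exact: coversW cx.
  move=> w wc wx; split; split.
  + move=> h; exact: le_trans h (ltW (coversW cx)).
  + move=> h; have wx' : w < x by rewrite lt_neqAle wx h.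
    have [c' [c'x wc']] := down_cover wx'.
    case: (eqVneq c' c) => [<-//|neq].
    exfalso; apply: B1; exists c', c; split; first exact: cover_incomp c'x cx neq.
    by split; exact: coversW.
  + move=> h; have cw : c < w by rewrite lt_neqAle eq_sym wc h.
    have := up_comparable ht r top c x w (ltW (coversW cx)) h.
    rewrite /Order.comparable => /orP[//|wx2].
    have wx' : w < x by rewrite lt_neqAle wx wx2.
    by exfalso; exact: coversE cx cw wx'.
  + move=> h; exact: le_trans (ltW (coversW cx)) h.
- move=> m; split; [|split].
  + by move=> [u [v [_ [ux _]]]]; exact: m u ux.
  + move=> [u [v [nc [xu xv]]]].
    by move: nc; rewrite (up_comparable ht r top x u v (ltW xu) (ltW xv)).
  + by move=> [u [ux _]]; exact: m u ux.
Qed.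

End Gen2.

Arguments up_comparable {d T} _ {r} _ {x u v}.
Arguments down_comparable {d T} _ {r} _ {x u v}.

Section Dual2.
Context {d : Order.disp_t} {T : finPOrderType d}.
Implicit Types x y z u v w a b c : T.

Lemma leaf_max : hasse_tree (T:=T) -> forall r, (forall x, r <= x) ->
  forall x, leaf r x <-> (forall y, ~ x < y).
Proof.
move=> ht r bot x.
have := @leaf_min _ T^d (hasse_tree_dual ht) r bot x.
by rewrite leaf_dual.
Qed.

Definition upchain x := forall u v, x <= u -> x <= v -> u >=< v.

Lemma P1_upchain : hasse_tree (T:=T) -> forall r, (forall x, r <= x) ->
  forall x, in_P1 r x <-> upchain x.
Proof.
move=> ht r bot x; have lm := leaf_max ht r bot.
split.
- move=> h u v xu xv; apply/negPn/negP => nc.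
  have [mu [_ umu mmu]] := exists_max (fun z => u <= z) u (lexx u).
  have [mv [_ vmv mmv]] := exists_max (fun z => v <= z) v (lexx v).
  have lu : leaf r mu.
    by apply/lm => z muz; apply: (mmu z) => //; exact: le_trans umu (ltW muz).
  have lv : leaf r mv.
    by apply/lm => z mvz; apply: (mmv z) => //; exact: le_trans vmv (ltW mvz).
  have neq : mu != mv.
    apply/eqP => e; rewrite -e in vmv.
    by move: nc; rewrite (down_comparable ht bot umu vmv).
  have : (#|[set mu; mv]| <= #|[set l | leaf r l && (x <= l)%O]|)%N.
    apply: subset_leq_card; apply/subsetP => z; rewrite !inE => /orP[/eqP->|/eqP->].
      by rewrite lu (le_trans xu umu).
    by rewrite lv (le_trans xv vmv).
  by rewrite cards2 neq (eqP h).
- move=> uc.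
  have [m [_ xm mm]] := exists_max (fun z => x <= z) x (lexx x).
  have maxm : forall z, ~ m < z.
    by move=> z mz; apply: (mm z) => //; exact: le_trans xm (ltW mz).
  rewrite /in_P1 (_ : [set l | leaf r l && (x <= l)] = [set m]) ?cards1 //.
  apply/setP => l; rewrite !inE; apply/idP/eqP => [/andP[ll xl]|->].
    have maxl := (lm l).1 ll.
    case: (eqVneq l m) => // ne; exfalso.
    move: (uc l m xl xm); rewrite /Order.comparable => /orP[lm'|ml].
      by apply: (maxl m); rewrite lt_neqAle ne lm'.
    by apply: (maxm l); rewrite lt_neqAle eq_sym ne ml.
  by rewrite xm andbT; apply/(lm m).
Qed.

Lemma basic_P2 : hasse_tree (T:=T) -> forall r, (forall x, r <= x) ->
  forall x, basic x <-> (upchain x /\ forall y, upchain y -> ~ y < x).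
Proof.
move=> ht r bot x; split.
- move=> [_ [B2 B3]].
  have ucx : upchain x.
    move=> u v xu xv.
    case: (eqVneq x u) => [<-|nxu]; first exact: le_comparable.
    case: (eqVneq x v) => [<-|nxv]; first by rewrite comparable_sym; exact: le_comparable.
    apply/negPn/negP => nc; apply: B2; exists u, v; split => //.
    by rewrite !lt_neqAle nxu nxv xu xv.
  split => // y ucy yx; apply: B3.
  have [p [px yp]] := down_cover yx.
  exists p; split; first exact: coversW px.
  move=> w wp wx; split; split.
  + move=> h; exact: le_trans h (ltW (coversW px)).
  + move=> h; have wx' : w < x by rewrite lt_neqAle wx h.
    have [c [cx wc]] := down_cover wx'.
    by rewrite -(@downcover_unique _ _ ht x c p r cx px (bot c) (bot p)).
  + move=> h; have pw : p < w by rewrite lt_neqAle eq_sym wp h.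
    have ucp : upchain p by move=> a b pa pb; apply: ucy; [exact: le_trans yp pa|exact: le_trans yp pb].
    move: (ucp x w (ltW (coversW px)) h); rewrite /Order.comparable => /orP[//|wx2].
    have wx' : w < x by rewrite lt_neqAle wx wx2.
    by exfalso; exact: coversE px pw wx'.
  + move=> h; exact: le_trans (ltW (coversW px)) h.
- move=> [ucx noy]; split; [|split].
  + move=> [u [v [nc [ux vx]]]].
    by move: nc; rewrite (down_comparable ht bot (ltW ux) (ltW vx)).
  + move=> [u [v [nc [xu xv]]]].
    by move: nc; rewrite (ucx u v (ltW xu) (ltW xv)).
  + move=> [u [ux H]]; apply: (noy u) => //.
    have key : forall a, u <= a -> a = u \/ x <= a.
      move=> a ua; case: (eqVneq a u) => [->|au]; first by left.
      case: (eqVneq a x) => [->|ax]; first by right.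
      by right; apply/((H a au ax).2).1.
    move=> a b ua ub.
    case: (key a ua) => [->|xa]; first exact: le_comparable.
    case: (key b ub) => [->|xb]; first by rewrite comparable_sym; exact: le_comparable.
    exact: ucx.
Qed.

End Dual2.

Theorem proposition3p8 (d : Order.disp_t) (T : finPOrderType d) (r : T) :
  @hasse_tree d T ->
  ((forall x : T, x <= r) ->
     forall x : T, (basic x <-> leaf r x) /\ (leaf r x <-> minimal x)) /\
  ((forall x : T, r <= x) ->
     forall x : T, basic x <-> (in_P1 r x /\ forall y : T, in_P1 r y -> ~ (y < x))).
Proof.
move=> ht; split.
  move=> top x.
  have h1 := basic_min ht r top x.
  have h2 := leaf_min ht r top x.
  tauto.
move=> bot x.
have hP := P1_upchain ht r bot.
have hb := basic_P2 ht r bot x.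
split.
  move/hb => [ux H]; split; first by apply/hP.
  by move=> y /hP; exact: H.
move=> [px H]; apply/hb; split; first by apply/hP.
by move=> y /hP; exact: H.
Qed.
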